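(* Let $0<\beta<\mu$ and $0<v_0<x_0$, and set $V(s)=v_0e^{\beta s}$. For $t>0$ let $$x_t(s)=\frac{v_0e^{\beta t}\sinh(\mu s)+x_0\sinh(\mu(t-s))}{\sinh(\mu t)},\qquad s\ge0,$$ (so $x_t(0)=x_0$, $x_t(t)=V(t)$). Define $$\phi_2(s)=\Big(1-\frac{\beta}{\mu}\Big)e^{(\beta+\mu)s}+\Big(1+\frac{\beta}{\mu}\Big)e^{(\beta-\mu)s}.$$ Then the equation $\phi_2(t)=2x_0/v_0$ has a unique positive solution $t_2$, and $$\operatorname{sgn}\big(x_t'(t)-V'(t)\big)=\begin{cases}-1 & t<t_2,\\ 0 & t=t_2,\\ +1 & t>t_2.\end{cases}$$ Moreover $t_1<t^o_V<t_2$, where $t_1=\frac{1}{\mu+\beta}\log\frac{x_0}{v_0}$ and $t^o_V$ is the unique positive solution of $\big(1-\frac{\beta}{\mu}\big)e^{(\mu+\beta)t}+\frac{\beta}{\mu}e^{(\beta-\mu)t}=\frac{x_0}{v_0}$.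
   Context: $x_t'(t)$ denotes the derivative of $s\mapsto x_t(s)$ evaluated at $s=t$. *)

(* Defs.v *)
From Stdlib Require Import Reals.
From Coquelicot Require Import Coquelicot.
Open Scope R_scope.

Definition Vfun (v0 beta : R) (s : R) : R := v0 * exp (beta * s).

Definition xpath (mu beta v0 x0 t : R) (s : R) : R :=
  (v0 * exp (beta * t) * sinh (mu * s) + x0 * sinh (mu * (t - s))) / sinh (mu * t).

Definition phi2 (mu beta : R) (s : R) : R :=
  (1 - beta / mu) * exp ((beta + mu) * s) + (1 + beta / mu) * exp ((beta - mu) * s).

(* left-hand side of the equation defining t^o_V *)
Definition psiV (mu beta : R) (t : R) : R :=
  (1 - beta / mu) * exp ((mu + beta) * t) + (beta / mu) * exp ((beta - mu) * t).

Definition t1 (mu beta v0 x0 : R) : R := / (mu + beta) * ln (x0 / v0).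

(* Main.v *)
Require Import Defs.
From Stdlib Require Import Reals Lra.
From Coquelicot Require Import Coquelicot.
Open Scope R_scope.

Lemma mono (f df : R -> R) : (forall x, is_derive f x (df x)) -> (forall x, 0 < x -> df x > 0) ->
  forall x y, 0 < x -> x < y -> f x < f y.
Proof.
  intros Hd Hp x y Hx Hxy.
  apply (incr_function f (Finite 0) p_infty df); simpl; auto; lra.
Qed.

Lemma root_exists (f df : R -> R) c B : (forall x, is_derive f x (df x)) -> (forall x, 0 < x -> df x > 0) ->
  f 0 < c -> c <= f B -> 0 < B -> exists t, 0 < t /\ f t = c /\ (forall s, 0 < s -> f s = c -> s = t).
Proof.
  intros Hd Hp H0 HB HB0.
  assert (Hc : continuity f).
  { intro x; apply continuity_pt_filterlim. apply (ex_derive_continuous (K:=R_AbsRing) (V:=R_NormedModule) f x). eexists; apply Hd. }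
  destruct (IVT_gen f 0 B c Hc) as [t [Ht Hft]].
  { rewrite Rmin_left by lra. rewrite Rmax_right by lra. lra. }
  rewrite Rmin_left in Ht by lra. rewrite Rmax_right in Ht by lra.
  assert (0 < t). { destruct (Req_dec t 0); [subst; lra | lra]. }
  exists t; split; [|split]; auto.
  intros s Hs Hfs.
  destruct (Rtotal_order s t) as [h|[h|h]]; auto.
  - pose proof (mono f df Hd Hp s t Hs h); lra.
  - pose proof (mono f df Hd Hp t s H h); lra.
Qed.

Lemma xder mu beta v0 x0 t : 0 < mu -> 0 < v0 -> 0 < t ->
  Derive (xpath mu beta v0 x0 t) t - Derive (Vfun v0 beta) t
  = (mu * v0 / 2) * (phi2 mu beta t - 2 * x0 / v0) / sinh (mu * t).
Proof.
  intros Hmu Hv Ht.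
  assert (Hs : 0 < sinh (mu * t)).
  { unfold sinh. pose proof (exp_increasing (- (mu*t)) (mu*t)). nra. }
  rewrite (is_derive_unique (Vfun v0 beta) t (v0 * (beta * exp (beta * t)))).
  2:{ unfold Vfun; auto_derive; auto; ring. }
  rewrite (is_derive_unique (xpath mu beta v0 x0 t) t
     (mu * (v0 * exp (beta * t) * cosh (mu * t) - x0) / sinh (mu * t))).
  2:{ unfold xpath. unfold sinh. auto_derive; auto.
      replace (mu * (t + - t)) with 0 by ring. rewrite Ropp_0, exp_0. unfold cosh.
      unfold sinh in Hs. field. lra. }
  unfold phi2, cosh. unfold sinh in *.
  replace ((beta + mu) * t) with (beta * t + mu * t) by ring.
  replace ((beta - mu) * t) with (beta * t + - (mu * t)) by ring.
  rewrite !exp_plus, !exp_Ropp in *.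
  assert (0 < exp (mu * t)) by apply exp_pos.
  assert (E : exp (mu * t) * exp (mu * t) - 1 = exp (mu * t) * (exp (mu * t) - / exp (mu * t))) by (field; lra).
  field. split; [lra|]. split; [lra|]. split; [lra|]. rewrite E.
  apply Rgt_not_eq. apply Rmult_lt_0_compat; lra.
Qed.

Lemma sgn_help k d s : 0 < k -> 0 < s ->
  (d < 0 -> k * d / s < 0) /\ (d = 0 -> k * d / s = 0) /\ (d > 0 -> k * d / s > 0).
Proof.
  intros Hk Hs. unfold Rdiv. assert (0 < / s) by (apply Rinv_0_lt_compat; lra).
  split; [|split].
  - intro; assert (k * d < 0) by nra; nra.
  - intro; subst; ring.
  - intro; assert (k * d > 0) by nra; nra.
Qed.

Theorem proposition1 (mu beta v0 x0 : R) :
  0 < beta -> beta < mu -> 0 < v0 -> v0 < x0 ->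
  exists t2 tV : R,
    (* t2 is the unique positive solution of phi2(t) = 2 x0 / v0 *)
    (0 < t2 /\ phi2 mu beta t2 = 2 * x0 / v0 /\
     forall t, 0 < t -> phi2 mu beta t = 2 * x0 / v0 -> t = t2) /\
    (* sign of x_t'(t) - V'(t) for t > 0 *)
    (forall t, 0 < t ->
       (t < t2 -> Derive (xpath mu beta v0 x0 t) t - Derive (Vfun v0 beta) t < 0) /\
       (t = t2 -> Derive (xpath mu beta v0 x0 t) t - Derive (Vfun v0 beta) t = 0) /\
       (t2 < t -> Derive (xpath mu beta v0 x0 t) t - Derive (Vfun v0 beta) t > 0)) /\
    (* t^o_V is the unique positive solution of psiV(t) = x0 / v0 *)
    (0 < tV /\ psiV mu beta tV = x0 / v0 /\
     forall t, 0 < t -> psiV mu beta t = x0 / v0 -> t = tV) /\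
    t1 mu beta v0 x0 < tV /\ tV < t2.
Proof.
  intros Hb Hbm Hv Hx.
  assert (Hmu : 0 < mu) by lra.
  assert (Hq : 1 < x0 / v0). { apply (Rmult_lt_reg_r v0); auto. field_simplify; lra. }
  assert (Hb1 : 0 < 1 - beta / mu).
  { assert (beta / mu < 1). { apply (Rmult_lt_reg_r mu); auto. field_simplify; lra. } lra. }
  assert (Hbp : 0 < beta / mu) by (apply Rdiv_lt_0_compat; lra).
  set (dphi := fun x => (mu^2 - beta^2) / mu * (exp ((beta + mu) * x) - exp ((beta - mu) * x))).
  set (dpsi := fun x => (mu - beta) / mu * ((mu + beta) * exp ((mu + beta) * x) - beta * exp ((beta - mu) * x))).
  assert (Dphi : forall x, is_derive (phi2 mu beta) x (dphi x)).
  { intro x; unfold phi2, dphi; auto_derive; auto. field. lra. }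
  assert (Dpsi : forall x, is_derive (psiV mu beta) x (dpsi x)).
  { intro x; unfold psiV, dpsi; auto_derive; auto. field. lra. }
  assert (Pphi : forall x, 0 < x -> dphi x > 0).
  { intros x Hx0; unfold dphi.
    assert (exp ((beta - mu) * x) < exp ((beta + mu) * x)) by (apply exp_increasing; nra).
    assert (0 < (mu^2 - beta^2) / mu) by (apply Rdiv_lt_0_compat; nra).
    nra. }
  assert (Ppsi : forall x, 0 < x -> dpsi x > 0).
  { intros x Hx0; unfold dpsi.
    assert (exp ((beta - mu) * x) < 1) by (rewrite <- exp_0; apply exp_increasing; nra).
    assert (1 < exp ((mu + beta) * x)) by (rewrite <- exp_0; apply exp_increasing; nra).
    assert (0 < (mu - beta) / mu) by (apply Rdiv_lt_0_compat; nra).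
    assert (0 < (mu + beta) * exp ((mu + beta) * x) - beta * exp ((beta - mu) * x)) by nra.
    nra. }
  set (c2 := 2 * x0 / v0).
  set (B2 := c2 / ((1 - beta / mu) * (beta + mu))).
  assert (HB2 : 0 < B2). { unfold B2, c2. apply Rdiv_lt_0_compat. apply Rdiv_lt_0_compat; lra. nra. }
  destruct (root_exists (phi2 mu beta) dphi c2 B2 Dphi Pphi) as [t2 [Ht2 [Ht2e Ht2u]]]; auto.
  { unfold phi2, c2. rewrite !Rmult_0_r, exp_0. assert (2 < 2 * x0 / v0) by (unfold Rdiv in *; lra). lra. }
  { unfold phi2. pose proof (exp_ineq1_le ((beta + mu) * B2)).
    pose proof (exp_pos ((beta - mu) * B2)).
    assert ((1 - beta / mu) * ((beta + mu) * B2) = c2) by (unfold B2; field; split; lra).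
    assert (0 < 1 + beta / mu) by lra.
    assert (0 <= (1 + beta / mu) * exp ((beta - mu) * B2)) by nra.
    assert ((1 - beta / mu) * (1 + (beta + mu) * B2) <= (1 - beta / mu) * exp ((beta + mu) * B2)) by nra.
    nra. }
  set (c := x0 / v0).
  set (BV := c / ((1 - beta / mu) * (mu + beta))).
  assert (HBV : 0 < BV). { unfold BV, c. apply Rdiv_lt_0_compat. lra. nra. }
  destruct (root_exists (psiV mu beta) dpsi c BV Dpsi Ppsi) as [tV [HtV [HtVe HtVu]]]; auto.
  { unfold psiV, c. rewrite !Rmult_0_r, exp_0. lra. }
  { unfold psiV. pose proof (exp_ineq1_le ((mu + beta) * BV)).
    pose proof (exp_pos ((beta - mu) * BV)).
    assert ((1 - beta / mu) * ((mu + beta) * BV) = c) by (unfold BV; field; split; lra).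
    assert (0 <= beta / mu * exp ((beta - mu) * BV)) by nra.
    assert ((1 - beta / mu) * (1 + (mu + beta) * BV) <= (1 - beta / mu) * exp ((mu + beta) * BV)) by nra.
    nra. }
  exists t2, tV. split; [|split; [|split; [|split]]].
  - auto.
  - intros t Ht. rewrite xder by auto.
    assert (Hs : 0 < sinh (mu * t)).
    { unfold sinh. pose proof (exp_increasing (- (mu*t)) (mu*t)). nra. }
    destruct (sgn_help (mu * v0 / 2) (phi2 mu beta t - 2 * x0 / v0) (sinh (mu * t))) as [A1 [A2 A3]]; auto.
    { nra. }
    split; [|split].
    + intro h. apply A1. pose proof (mono _ _ Dphi Pphi t t2 Ht h). fold c2; lra.
    + intro h. apply A2. subst. fold c2; lra.
    + intro h. apply A3. pose proof (mono _ _ Dphi Pphi t2 t Ht2 h). fold c2; lra.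
  - auto.
  - unfold t1.
    set (T := / (mu + beta) * ln (x0 / v0)).
    assert (Hl : 0 < ln (x0 / v0)) by (rewrite <- ln_1; apply ln_increasing; lra).
    assert (HT : 0 < T) by (unfold T; apply Rmult_lt_0_compat; [apply Rinv_0_lt_compat; lra | auto]).
    assert (HeT : exp ((mu + beta) * T) = c).
    { unfold T. replace ((mu + beta) * (/ (mu + beta) * ln (x0 / v0))) with (ln (x0 / v0)) by (field; lra).
      apply exp_ln. unfold c. lra. }
    assert (HpT : psiV mu beta T < c).
    { unfold psiV. rewrite HeT.
      assert (exp ((beta - mu) * T) < 1) by (rewrite <- exp_0; apply exp_increasing; nra).
      fold c in Hq. nra. }
    destruct (Rtotal_order T tV) as [h|[h|h]]; auto.
    + subst; lra.
    + pose proof (mono _ _ Dpsi Ppsi tV T HtV h). lra.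
  - assert (Hd : phi2 mu beta tV < 2 * psiV mu beta tV).
    { unfold phi2, psiV. rewrite (Rplus_comm mu beta).
      assert (exp ((beta - mu) * tV) < exp ((beta + mu) * tV)) by (apply exp_increasing; nra).
      nra. }
    rewrite HtVe in Hd.
    destruct (Rtotal_order tV t2) as [h|[h|h]]; auto.
    + subst. unfold c, c2 in *. unfold Rdiv in *. lra.
    + pose proof (mono _ _ Dphi Pphi t2 tV Ht2 h). unfold c, c2 in *. unfold Rdiv in *. lra.
Qed.
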